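(* Let $\Lambda=\langle a_1\rangle\perp\cdots\perp\langle a_n\rangle=\mathcal{O}_Ds_1\perp\cdots\perp\mathcal{O}_Ds_n$ be a skew-hermitian lattice with $\nu(a_1)\le\cdots\le\nu(a_n)$, and assume $\mu(\Lambda)>\nu(4)$ and $N(a_2),\dots,N(a_n)\in N(a_1)k^{*2}$. Let $(s;\sigma)\in\mathcal{B}(\Lambda)$, i.e. $s=(1-r)s_m-s_0$ with $s_0=\lambda_{m+1}s_{m+1}+\cdots+\lambda_ns_n$ ($\lambda_l\in\mathcal{O}_D$), $\sigma=a_m(1-\bar r)$ and $|1-\bar r|\ge|2|$. If for some $t\in\{1,\dots,n-m\}$ we have $|\lambda_{m+t}|\ge|\lambda_{m+t+l}|$ for all $l\in\{1,\dots,n-m-t\}$, then there exists a lattice $\Lambda'=\langle b_1\rangle\perp\cdots\perp\langle b_{t+1}\rangle\subseteq\Lambda$ such that: (1) $(s;\sigma)\in\mathcal{U}^+_k(\Lambda')$; (2) $\mu(\Lambda')\ge\mu(\Lambda)$; (3) $N(b_i)\in N(a_1)k^{*2}$ for all $i=1,\dots,t+1$.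
   Context: $k$ is a dyadic local field of characteristic $0$ (finite extension of $\mathbb{Q}_2$), $\nu_k$ its normalized valuation, $|\cdot|_k$ its absolute value. $D$ is the quaternion division algebra over $k$ with canonical involution $q\mapsto\bar q$ and reduced norm $N$; $|q|:=|N(q)|_k$, $\nu(q):=\nu_k(N(q))$; $\mathcal{O}_D=\{q:|q|\le1\}$. A skew-hermitian space is a free $D$-module $V$ of finite rank with nondegenerate $h:V\times V\to D$, $D$-linear in the first variable, $h(x,y)=-\overline{h(y,x)}$. For pure quaternions $a_i$, $\langle a_1\rangle\perp\cdots\perp\langle a_n\rangle=\mathcal{O}_Ds_1\perp\cdots\perp\mathcal{O}_Ds_n$ means an orthogonal sum with $h(s_i,s_i)=a_i$; for such a lattice with $\nu(a_1)\le\cdots\le\nu(a_n)$, $\mu(\Lambda)=\min_i(\nu(a_{i+1})-\nu(a_i))$. For $s\in V$, $\sigma\in D^*$ with $\sigma-\bar\sigma=h(s,s)$, the simple rotation is $(s;\sigma)(x)=x-h(x,s)\sigma^{-1}s$; it is an isometry. $\mathcal{U}^+_k(\Lambda)$ is the group of isometries of $h$ with $\phi(\Lambda)=\Lambda$. $\mathcal{B}(\Lambda)$ is the set of simple rotations $(s;\sigma)\in\mathcal{U}^+_k(\Lambda)$ for which there exist $m\in\{1,\dots,n\}$, $r\in\mathcal{O}_D$ with $|1-r|\ge|2|$ and $\lambda_{m+1},\dots,\lambda_n\in\mathcal{O}_D$ with $s=(1-r)s_m-\sum_{l>m}\lambda_ls_l$ and $\sigma=a_m(1-\bar r)$. *)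

(* Defs.v *)
From mathcomp Require Import all_boot all_order all_algebra.
Set Implicit Arguments. Unset Strict Implicit. Unset Printing Implicit Defensive.
Import Order.TTheory GRing.Theory Num.Theory.
Local Open Scope ring_scope.

(* A finite extension of Q_2 = a field of characteristic 0, complete for a
   discrete (normalized, Z-valued) valuation, with finite residue field of
   characteristic 2.  The value [v 0] is irrelevant (never used). *)
Definition vge (k : fieldType) (v : k -> int) (x : k) (N : int) : Prop :=
  x = 0 \/ N <= v x.

Record dyadic_local_field (k : fieldType) (v : k -> int) : Prop := {
  dlf_char0 : [pchar k] =i pred0;
  dlf_mul : forall x y : k, x != 0 -> y != 0 -> v (x * y) = v x + v y;
  dlf_add : forall x y : k, x != 0 -> y != 0 -> x + y != 0 ->
              Num.min (v x) (v y) <= v (x + y);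
  dlf_normalized : exists pi : k, pi != 0 /\ v pi = 1;
  dlf_residue_char2 : 0 < v 2%:R;
  dlf_finite_residue : exists reps : seq k, forall x : k, vge v x 0 ->
              exists2 y, y \in reps & (vge v (x - y) 1);
  dlf_complete : forall u : nat -> k,
      (forall N : int, exists M : nat, forall i j : nat,
          (M <= i)%N -> (M <= j)%N -> vge v (u i - u j) N) ->
      exists l : k, forall N : int, exists M : nat, forall i : nat,
          (M <= i)%N -> vge v (u i - l) N
}.

Record quat (k : Type) := Quat { q0 : k; q1 : k; q2 : k; q3 : k }.

Section Quaternions.
Variables (k : fieldType) (alpha beta : k).

Definition qzero : quat k := Quat 0 0 0 0.
Definition qofk (c : k) : quat k := Quat c 0 0 0.
Definition qone : quat k := qofk 1.
Definition qadd (p q : quat k) : quat k :=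
  Quat (q0 p + q0 q) (q1 p + q1 q) (q2 p + q2 q) (q3 p + q3 q).
Definition qopp (p : quat k) : quat k := Quat (- q0 p) (- q1 p) (- q2 p) (- q3 p).
Definition qsub (p q : quat k) : quat k := qadd p (qopp q).
Definition qscal (c : k) (p : quat k) : quat k :=
  Quat (c * q0 p) (c * q1 p) (c * q2 p) (c * q3 p).
(* basis 1, i, j, ij with i^2 = alpha, j^2 = beta, ij = - ji *)
Definition qmul (a b : quat k) : quat k :=
  Quat (q0 a * q0 b + alpha * q1 a * q1 b + beta * q2 a * q2 b
          - alpha * beta * q3 a * q3 b)
       (q0 a * q1 b + q1 a * q0 b - beta * q2 a * q3 b + beta * q3 a * q2 b)
       (q0 a * q2 b + q2 a * q0 b + alpha * q1 a * q3 b - alpha * q3 a * q1 b)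
       (q0 a * q3 b + q3 a * q0 b + q1 a * q2 b - q2 a * q1 b).
Definition qconj (p : quat k) : quat k := Quat (q0 p) (- q1 p) (- q2 p) (- q3 p).
Definition qN (p : quat k) : k :=
  q0 p ^+ 2 - alpha * q1 p ^+ 2 - beta * q2 p ^+ 2 + alpha * beta * q3 p ^+ 2.
Definition qinv (p : quat k) : quat k := qscal (qN p)^-1 (qconj p).
Definition pure (p : quat k) : Prop := q0 p = 0.

Definition is_quat_division : Prop :=
  alpha != 0 /\ beta != 0 /\ forall p : quat k, qN p = 0 -> p = qzero.

Variable v : k -> int.
Definition nuD (p : quat k) : int := v (qN p).
(* |p| <= |q|, where |q| := |N(q)|_k (normalized absolute value) *)
Definition leabs (p q : quat k) : Prop :=
  qN p = 0 \/ (qN q != 0 /\ v (qN q) <= v (qN p)).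
Definition inO (p : quat k) : Prop := leabs p qone.

Variable n : nat.
Definition vec := 'I_n -> quat k.
Definition vzero : vec := fun _ => qzero.
Definition vadd (x y : vec) : vec := fun i => qadd (x i) (y i).
Definition vscale (c : quat k) (x : vec) : vec := fun i => qmul c (x i).

Variable a : 'I_n -> quat k.  (* a i = h(s_i, s_i) *)
(* h(x, y) for x = sum x_i s_i, y = sum y_i s_i *)
Definition herm (x y : vec) : quat k :=
  \big[qadd/qzero]_(i < n) qmul (qmul (x i) (a i)) (qconj (y i)).

Definition isometry (phi : vec -> vec) : Prop :=
  (forall c x y, phi (vadd (vscale c x) y) = vadd (vscale c (phi x)) (phi y))
  /\ bijective phi
  /\ (forall x y, herm (phi x) (phi y) = herm x y).

Definition simple_rot (s : vec) (sigma : quat k) : vec -> vec :=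
  fun x i => qsub (x i) (qmul (qmul (herm x s) (qinv sigma)) (s i)).

Definition inStd (x : vec) : Prop := forall i, inO (x i).
Definition inSpan (p : nat) (u : 'I_p -> vec) (x : vec) : Prop :=
  exists c : 'I_p -> quat k, (forall j, inO (c j)) /\
    x = \big[vadd/vzero]_(j < p) vscale (c j) (u j).

Definition stabilizes (phi : vec -> vec) (L : vec -> Prop) : Prop :=
  (forall x, L x -> L (phi x)) /\ (forall y, L y -> exists x, L x /\ phi x = y).
Definition inU (phi : vec -> vec) (L : vec -> Prop) : Prop :=
  isometry phi /\ stabilizes phi L.

Definition svec (m : 'I_n) (r : quat k) (lam : 'I_n -> quat k) : vec :=
  fun i => if i == m then qsub qone r
           else if (m < i)%N then qopp (lam i) else qzero.
Definition sigmaB (m : 'I_n) (r : quat k) : quat k :=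
  qmul (a m) (qsub qone (qconj r)).

End Quaternions.

Definition in_sqclass (k : fieldType) (c d : k) : Prop :=
  exists e : k, e != 0 /\ c = d * e ^+ 2.

(* mu of a lattice <b_1> _|_ ... _|_ <b_p>: min over consecutive gaps of the
   valuations after sorting them increasingly (only used for p >= 2). *)
Definition gapmin (s : seq int) : int :=
  match s with
  | x :: s' => match pairmap (fun p q => q - p) x s' with
               | [::] => 0
               | g :: gs => foldr Num.min g gs
               end
  | [::] => 0
  end.
Definition mu (s : seq int) : int := gapmin (sort (fun x y : int => x <= y) s).
Arguments qzero {k}.
Arguments qone {k}.

(* Main.v *)
Require Import Defs.
From HB Require Import structures.
From mathcomp Require Import all_boot all_order all_algebra.
From mathcomp Require Import ring lra zify.
From Stdlib Require Import FunctionalExtensionality.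
Set Implicit Arguments. Unset Strict Implicit. Unset Printing Implicit Defensive.
Import Order.TTheory GRing.Theory Num.Theory.
Local Open Scope ring_scope.

Section Val.
Variables (k : fieldType) (v : k -> int).
Hypothesis hk : dyadic_local_field v.

Lemma vM (x y : k) : x != 0 -> y != 0 -> v (x*y) = v x + v y.
Proof. move=> hx hy; exact: (dlf_mul hk hx hy). Qed.
Lemma v1 : v 1 = 0.
Proof. have h : v 1 = v 1 + v 1 by rewrite -vM ?oner_neq0 ?mulr1. lia. Qed.
Lemma vN1 : v (-1) = 0.
Proof.
have h1 : (-1 : k) != 0 by rewrite oppr_eq0 oner_neq0.
have h : v 1 = v (-1) + v (-1) by rewrite -vM // mulrNN mulr1.
rewrite v1 in h; lia.
Qed.
Lemma vN (x : k) : v (- x) = v x.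
Proof.
have [->|x0] := eqVneq x 0; first by rewrite oppr0.
have h1 : (-1 : k) != 0 by rewrite oppr_eq0 oner_neq0.
by rewrite -mulN1r vM // vN1 add0r.
Qed.
Lemma vV (x : k) : x != 0 -> v x^-1 = - v x.
Proof.
move=> x0; have h : v 1 = v x + v x^-1 by rewrite -vM ?invr_neq0 // mulfV.
rewrite v1 in h; lia.
Qed.

Lemma vge0 N : vge v 0 N. Proof. by left. Qed.
Lemma vge_self x : vge v x (v x). Proof. by right. Qed.
Lemma vge_le x N M : vge v x N -> M <= N -> vge v x M.
Proof. case=> [->|h] hm; [by left| right; exact: le_trans hm h]. Qed.
Lemma vge_add x y N : vge v x N -> vge v y N -> vge v (x+y) N.
Proof.
case=> [->|hx]; first by rewrite add0r.
case=> [->|hy]; first by right; rewrite addr0.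
have [->|x0] := eqVneq x 0; first by rewrite add0r; right.
have [->|y0] := eqVneq y 0; first by rewrite addr0; right.
have [->|s0] := eqVneq (x+y) 0; first by left.
right; apply: le_trans (dlf_add hk x0 y0 s0); rewrite le_min hx hy //.
Qed.
Lemma vge_opp x N : vge v x N -> vge v (-x) N.
Proof. case=> [->|h]; [by rewrite oppr0; left | by right; rewrite vN]. Qed.
Lemma vge_sub x y N : vge v x N -> vge v y N -> vge v (x-y) N.
Proof. by move=> hx hy; apply: vge_add => //; apply: vge_opp. Qed.
Lemma vge_mul x y N M : vge v x N -> vge v y M -> vge v (x*y) (N+M).
Proof.
case=> [->|hx]; first by rewrite mul0r; left.
case=> [->|hy]; first by rewrite mulr0; left.
have [->|x0] := eqVneq x 0; first by rewrite mul0r; left.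
have [->|y0] := eqVneq y 0; first by rewrite mulr0; left.
right; rewrite vM //; exact: lerD.
Qed.
Lemma vge_eq0 x : (forall N, vge v x N) -> x = 0.
Proof. move=> h; case: (h (v x + 1)) => // h'; exfalso; move: h'; lia. Qed.
Lemma vge_inv x : vge v (x^-1) (- v x).
Proof.
have [->|x0] := eqVneq x 0; first by rewrite invr0; left.
by right; rewrite vV.
Qed.
Lemma vge1 : vge v 1 0. Proof. by right; rewrite v1. Qed.

Lemma v_unit z : vge v z 1 -> 1 + z != 0 /\ v (1 + z) = 0.
Proof.
move=> hz.
have h1 : ~ vge v (1 + z) 1.
  move=> h; have := vge_sub h hz; rewrite addrK; case; first by move/eqP; rewrite oner_eq0.
  rewrite v1; lia.
have hz0 : vge v z 0 by apply: vge_le hz _.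
have hn : 1 + z != 0 by apply/negP => /eqP e; apply: h1; rewrite e; left.
have h0 : 0 <= v (1 + z).
  by case: (vge_add vge1 hz0) => [e|//]; rewrite e eqxx in hn.
split=> //.
have h2 : ~ (1 <= v (1 + z)) by move=> h'; apply: h1; right.
lia.
Qed.

Lemma two_neq0 : (2%:R : k) != 0.
Proof.
have /pcharf0P h := dlf_char0 hk.
by rewrite h.
Qed.

Lemma v2pos : 0 < v 2%:R. Proof. exact: dlf_residue_char2 hk. Qed.

Fixpoint hs (c : k) (n : nat) : k := if n is n'.+1 then 1 - c / hs c n' else 1.

Section Hensel.
Variable c : k.
Hypothesis hc : vge v c 1.

Lemma hs_near n : vge v (hs c n - 1) 1.
Proof.
elim: n => [|n IH] /=; first by rewrite subrr; left.
have [hn0 hnv] := v_unit IH; rewrite addrC subrK in hn0 hnv.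
rewrite addrC addKr; apply: vge_opp.
have := vge_mul hc (vge_inv (hs c n)); rewrite hnv oppr0 addr0; exact.
Qed.
Lemma hs_unit n : hs c n != 0 /\ v (hs c n) = 0.
Proof. by have [h1 h2] := v_unit (hs_near n); rewrite addrC subrK in h1 h2. Qed.
Lemma hs_vge0 n : vge v (hs c n) 0.
Proof. by right; rewrite (hs_unit n).2. Qed.
Lemma hs_vinv n : vge v (hs c n)^-1 0.
Proof. by right; rewrite (vV (hs_unit n).1) (hs_unit n).2. Qed.

Lemma hs_diff n : vge v (hs c n.+1 - hs c n) (n.+1)%:Z.
Proof.
elim: n => [|n IH].
  by rewrite /= divr1 addrAC subrr add0r; apply: vge_opp.
have e : hs c n.+2 - hs c n.+1 = c * (hs c n.+1 - hs c n) * (hs c n * hs c n.+1)^-1.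
  have h0 := (hs_unit n).1; have h1 := (hs_unit n.+1).1.
  have -> : hs c n.+2 - hs c n.+1 = (1 - c / hs c n.+1) - (1 - c / hs c n) by [].
  move: h0 h1; set x := hs c n; set y := hs c n.+1 => h0 h1.
  field; apply/andP; split => //.
have := vge_mul (vge_mul hc IH) (vge_inv (hs c n * hs c n.+1)).
rewrite -e; move/vge_le; apply.
rewrite vM ?(hs_unit n).1 ?(hs_unit n.+1).1 // (hs_unit n).2 (hs_unit n.+1).2.
lia.
Qed.

Lemma hs_cauchy i p : vge v (hs c (i + p) - hs c i) (i.+1)%:Z.
Proof.
elim: p => [|p IH]; first by rewrite addn0 subrr; left.
have -> : hs c (i + p.+1) - hs c i = (hs c (i+p).+1 - hs c (i + p)) + (hs c (i + p) - hs c i).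
  by rewrite addnS addrA subrK.
apply: vge_add => //; apply: vge_le (hs_diff _) _; lia.
Qed.

Lemma hensel : exists u, u * u - u + c = 0.
Proof.
have hC : forall N : int, exists M : nat, forall i j, (M <= i)%N -> (M <= j)%N ->
    vge v (hs c i - hs c j) N.
  move=> N; exists `|N|%N => i j hi hj.
  have [hij|hji] := leqP i j.
    rewrite -(subnKC hij) -opprB; apply: vge_opp; apply: vge_le (hs_cauchy _ _) _; lia.
  rewrite -(subnKC (ltnW hji)); apply: vge_le (hs_cauchy _ _) _; lia.
have [l hl] := dlf_complete hk hC.
exists l; apply: vge_eq0 => T.
have [M hM] := hl `|T|%:Z.
set i := (M + `|T|)%N.
have hi := hM i (leq_addr _ _).
have hu := (hs_unit i).1.
have ec : c = hs c i * (1 - hs c i.+1) by rewrite /= opprB addrC subrK mulrC divfK.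
have -> : l * l - l + c = - (hs c i * (hs c i.+1 - hs c i)) -
   (hs c i - l) * ((hs c i - 1) + hs c i - (hs c i - l)).
  have key : forall (x y w e : k), e = x * (1 - y) ->
     w*w - w + e = -(x*(y - x)) - (x - w)*((x-1) + x - (x-w)).
    by move=> ? ? ? ? ->; ring.
  exact: key.
apply: vge_sub.
  apply: vge_opp; have := vge_mul (hs_vge0 i) (hs_diff i); move/vge_le; apply; lia.
have h2 : vge v ((hs c i - 1) + hs c i - (hs c i - l)) 0.
  apply: vge_sub; first apply: vge_add; [apply: vge_le (hs_near i) _ => //| exact: hs_vge0|].
  apply: vge_le hi _; lia.
have := vge_mul hi h2; move/vge_le; apply; lia.
Qed.
End Hensel.

Lemma vsqrt z : vge v z (2 * v 2%:R + 1) -> exists x, x != 0 /\ 1 + z = x * x.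
Proof.
move=> hz.
have h2 := two_neq0; have e4 : (4%:R : k) = 2%:R * 2%:R by rewrite -natrM.
have h4 : (4%:R : k) != 0 by rewrite e4 mulf_neq0.
have hc : vge v (- (z / 4%:R)) 1.
  apply: vge_opp; have := vge_mul hz (vge_inv 4%:R); move/vge_le; apply.
  have -> : (4%:R : k) = 2%:R * 2%:R by rewrite -natrM.
  rewrite vM //; lia.
have [u hu] := hensel hc.
exists (1 - 2%:R * u); split.
  apply/negP => /eqP e.
  have hz1 : vge v z 1 by apply: vge_le hz _; have := v2pos; lia.
  have [hn _] := v_unit hz1; move: hn.
  have -> : 1 + z = (1 - 2%:R * u) * (1 - 2%:R * u).
    have -> : z = 4%:R * (z / 4%:R) by rewrite mulrC divfK.
    have -> : z / 4%:R = u * u - u by rewrite -[LHS]add0r -hu; ring.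
    rewrite (_ : (4%:R : k) = 2%:R * 2%:R) ?(natrM k 2 2) //; ring.
  by rewrite e mul0r eqxx.
have -> : z = 4%:R * (z / 4%:R) by rewrite mulrC divfK.
have -> : z / 4%:R = u * u - u by rewrite -[LHS]add0r -hu; ring.
rewrite (_ : (4%:R : k) = 2%:R * 2%:R) ?(natrM k 2 2) //; ring.
Qed.

End Val.

Section QA.
Variables (k : fieldType) (al be : k).
Implicit Types (p q w g : quat k) (c e x : k).

Lemma quatE (p q : quat k) : q0 p = q0 q -> q1 p = q1 q -> q2 p = q2 q -> q3 p = q3 q -> p = q.
Proof. by case: p; case: q => /= ???? ???? -> -> -> ->. Qed.

Ltac qs := repeat match goal with [ p : quat _ |- _ ] => destruct p end;
  rewrite /qinv /qsub /qmul /qadd /qopp /qconj /qscal /qone /qofk /qzero /qN /=;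
  try (congr Quat; ring); try ring.

Lemma qaddA : associative (@qadd k). Proof. move=> *; qs. Qed.
Lemma qaddC : commutative (@qadd k). Proof. move=> *; qs. Qed.
Lemma qadd0 : left_id qzero (@qadd k). Proof. move=> p; qs. Qed.
Lemma qaddr0 p : qadd p qzero = p. Proof. qs. Qed.
Lemma qmulA (p q w : quat k) : qmul al be p (qmul al be q w) = qmul al be (qmul al be p q) w.
Proof. qs. Qed.
Lemma qmulDl p q w : qmul al be (qadd p q) w = qadd (qmul al be p w) (qmul al be q w).
Proof. qs. Qed.
Lemma qmulDr p q w : qmul al be w (qadd p q) = qadd (qmul al be w p) (qmul al be w q).
Proof. qs. Qed.
Lemma qmul0r p : qmul al be qzero p = qzero. Proof. qs. Qed.
Lemma qmulr0 p : qmul al be p qzero = qzero. Proof. qs. Qed.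
Lemma qmul1r p : qmul al be qone p = p. Proof. qs. Qed.
Lemma qmulr1 p : qmul al be p qone = p. Proof. qs. Qed.
Lemma qmulNr p q : qmul al be (qopp p) q = qopp (qmul al be p q). Proof. qs. Qed.
Lemma qmulrN p q : qmul al be p (qopp q) = qopp (qmul al be p q). Proof. qs. Qed.
Lemma qconj1 : qconj (@qone k) = qone. Proof. qs. Qed.
Lemma qconj0 : qconj (@qzero k) = qzero. Proof. qs. Qed.
Lemma qsubK p q : qadd (qsub p q) q = p. Proof. qs. Qed.
Lemma qaddK p q : qsub (qadd p q) q = p. Proof. qs. Qed.
Lemma qsub0 p : qsub p qzero = p. Proof. qs. Qed.
Lemma qsub00 : qsub (@qzero k) qzero = qzero. Proof. qs. Qed.
Lemma qNM p q : qN al be (qmul al be p q) = qN al be p * qN al be q.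
Proof. qs. Qed.
Lemma qN_conj p : qN al be (qconj p) = qN al be p. Proof. qs. Qed.
Lemma qN_opp p : qN al be (qopp p) = qN al be p. Proof. qs. Qed.
Lemma qN_ofk c : qN al be (qofk c) = c * c. Proof. qs. Qed.
Lemma qN0 : qN al be qzero = 0. Proof. qs. Qed.
Lemma qN1 : qN al be qone = 1. Proof. qs. Qed.
Lemma qN_add p q : qN al be (qadd p q) =
  qN al be p + qN al be q + 2%:R * q0 (qmul al be p (qconj q)).
Proof. qs. Qed.
Lemma qN_subofk g x : qN al be (qsub g (qofk x)) = x * x - 2%:R * q0 g * x + qN al be g.
Proof. qs. Qed.
Lemma qmul_conj_scal c p : qmul al be p (qscal c (qconj p)) = qscal c (qofk (qN al be p)).
Proof. qs. Qed.
Lemma qmul_scal_conj c p : qmul al be (qscal c (qconj p)) p = qscal c (qofk (qN al be p)).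
Proof. qs. Qed.
Lemma qscal_ofk c e : qscal c (qofk e) = qofk (c * e). Proof. qs. Qed.
Lemma qmulV p : qN al be p != 0 -> qmul al be p (qinv al be p) = qone.
Proof. by move=> h; rewrite /qinv qmul_conj_scal qscal_ofk mulVf. Qed.
Lemma qmulVl p : qN al be p != 0 -> qmul al be (qinv al be p) p = qone.
Proof. by move=> h; rewrite /qinv qmul_scal_conj qscal_ofk mulVf. Qed.
Lemma qN_scal c p : qN al be (qscal c p) = c * c * qN al be p. Proof. qs. Qed.
Lemma qN_inv p : qN al be (qinv al be p) = (qN al be p)^-1.
Proof.
rewrite /qinv qN_scal qN_conj.
have [->|h] := eqVneq (qN al be p) 0; first by rewrite invr0 !mul0r.
by field.
Qed.
Lemma qinv0 : qinv al be qzero = qzero. Proof. by rewrite /qinv qN0 invr0; qs. Qed.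
Lemma qopp0 : qopp (@qzero k) = qzero. Proof. qs. Qed.
Lemma q_sub_mul p q w d : qsub (qmul al be p w) (qmul al be d (qmul al be q w)) =
  qmul al be (qsub p (qmul al be d q)) w.
Proof. qs. Qed.
Lemma q_add_mul p q w d : qadd (qmul al be p w) (qmul al be d (qmul al be q w)) =
  qmul al be (qadd p (qmul al be d q)) w.
Proof. qs. Qed.
Lemma qsub_add p q : qadd (qsub p q) q = p. Proof. qs. Qed.
End QA.

HB.instance Definition _ (k : fieldType) := Monoid.isComLaw.Build (quat k) qzero (@qadd k) (@qaddA k) (@qaddC k) (@qadd0 k).

Section QV.
Variables (k : fieldType) (v : k -> int) (al be : k).
Hypothesis hk : dyadic_local_field v.
Hypothesis hD : is_quat_division al be.
Local Notation N := (qN al be).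
Local Notation qm := (qmul al be).

Lemma N0_eq p : N p = 0 -> p = qzero. Proof. exact: hD.2.2. Qed.
Lemma N_neq0 p : p <> qzero -> N p != 0.
Proof. by move=> h; apply/eqP => /N0_eq. Qed.

Lemma trace_int g (d : int) : vge v (N g) (2*d - 1) -> vge v (2%:R * q0 g) d.
Proof.
move=> hM.
have [T0|T0] := eqVneq (2%:R * q0 g) 0; first by left.
case: (lerP d (v (2%:R * q0 g))) => hvT; first by right.
exfalso.
move: T0 hvT hM; set T := 2%:R * q0 g; set M := N g => T0 hvT hM.
have hTT : v (T * T) = v T + v T by rewrite (vM hk).
have hc : vge v (M / (T*T)) 1.
  have := vge_mul hk hM (vge_inv hk (T*T)); move/vge_le; apply; rewrite hTT; lia.
have [u hu] := hensel hk hc.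
have hx : (T*u)*(T*u) - T*(T*u) + M = 0.
  have -> : (T*u)*(T*u) - T*(T*u) + M = T*T*(u*u - u + M/(T*T)).
    by field.
  by rewrite hu mulr0.
have hN : N (qsub g (qofk (T*u))) = 0 by rewrite qN_subofk.
have eg := N0_eq hN.
set x := T * u in hx eg.
have e0 : q0 g = x by have := congr1 (@q0 k) eg; rewrite /= => /eqP; rewrite subr_eq0 => /eqP.
have e1 : q1 g = 0 by have := congr1 (@q1 k) eg; rewrite /= oppr0 addr0.
have e2 : q2 g = 0 by have := congr1 (@q2 k) eg; rewrite /= oppr0 addr0.
have e3 : q3 g = 0 by have := congr1 (@q3 k) eg; rewrite /= oppr0 addr0.
have eM : M = x * x by rewrite /M /qN e0 e1 e2 e3; ring.
have eT : T = 2%:R * x by rewrite /T e0.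
have x0 : x != 0 by apply/eqP => x0; move: T0; rewrite eT x0 mulr0 eqxx.
have h2 := two_neq0 hk.
have hv2 := v2pos hk.
move: hM; rewrite eM; case; first by move/eqP; rewrite mulf_eq0 (negbTE x0).
have vx : v (x*x) = v x + v x := vM hk x0 x0.
have vT : v (2%:R*x) = v 2%:R + v x := vM hk h2 x0.
rewrite vx; move: hvT; rewrite eT vT; lia.
Qed.

Lemma N_ultra p q d : vge v (N p) d -> vge v (N q) d -> vge v (N (qadd p q)) d.
Proof.
move=> hp hq; rewrite qN_add; apply: (vge_add hk); first exact: (vge_add hk hp hq).
apply: trace_int; rewrite qNM qN_conj.
have := vge_mul hk hp hq; move/vge_le; apply; lia.
Qed.

Lemma N_ultra_big (I : Type) (r : seq I) (P : pred I) (F : I -> quat k) d :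
  (forall i, P i -> vge v (N (F i)) d) ->
  vge v (N (\big[@qadd k/qzero]_(i <- r | P i) F i)) d.
Proof.
move=> h; apply: (big_ind (fun q => vge v (N q) d)) => //.
  by rewrite qN0; left.
by move=> x y hx hy; apply: N_ultra.
Qed.

Lemma inO_vge p : inO al be v p <-> vge v (N p) 0.
Proof.
rewrite /inO /leabs qN1 (v1 hk); split.
  by case=> [->|[_ h]]; [left|right].
by case=> [->|h]; [left|right; split => //; exact: oner_neq0].
Qed.

End QV.

Definition gapf (p q : int) := q - p.

Lemma foldr_min_le (g : int) gs y : y \in g :: gs -> foldr Num.min g gs <= y.
Proof.
elim: gs g => [|h gs IH] g /=; first by rewrite inE => /eqP ->.
rewrite !inE => /orP [/eqP e|/orP [/eqP ->|hy]].
- by rewrite ge_min (IH g) ?orbT // e mem_head.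
- by rewrite ge_min lexx.
- by rewrite ge_min (IH g) ?orbT // inE hy orbT.
Qed.

Lemma foldr_min_ge (g : int) gs c : (forall y, y \in g :: gs -> c <= y) -> c <= foldr Num.min g gs.
Proof.
elim: gs g => [|h gs IH] g /= hy; first by apply: hy; rewrite mem_head.
rewrite le_min hy ?inE ?eqxx ?orbT //= IH // => y; rewrite inE => /orP [/eqP ->|hy'].
  by apply: hy; rewrite mem_head.
by apply: hy; rewrite !inE hy' !orbT.
Qed.

Lemma gapmin_le x s y : y \in pairmap gapf x s -> gapmin (x :: s) <= y.
Proof.
rewrite /gapmin -/(gapf); case: (pairmap gapf x s) => [|g gs] //.
exact: foldr_min_le.
Qed.

Lemma gapmin_ge x s c : s != [::] -> (forall y, y \in pairmap gapf x s -> c <= y) ->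
  c <= gapmin (x :: s).
Proof.
rewrite /gapmin -/(gapf); case: s => [|z s] // _.
rewrite [pairmap _ _ _]/=; move=> h; exact: foldr_min_ge.
Qed.

Lemma pairmap_iota (F : nat -> int) i len :
  pairmap gapf (F i) (map F (iota i.+1 len)) = map (fun j => F j.+1 - F j) (iota i len).
Proof. by elim: len i => [|len IH] i //=; rewrite IH. Qed.

Lemma sorted_map_iota (F : nat -> int) i len :
  (forall p q, (i <= p)%N -> (p <= q)%N -> (q < i + len)%N -> F p <= F q) ->
  sorted (fun x y : int => x <= y) (map F (iota i len)).
Proof.
elim: len i => [|len IH] i h //=.
case: len IH h => [|len] IH h //=.
rewrite h ?leqnSn //= ?addnS ?ltnS ?leq_addr //.
have := IH i.+1; rewrite /=; apply=> p q hp hpq hq; apply: h => //.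
  exact: ltnW. by move: hq; rewrite addSnnS.
Qed.

Section Main.
Variables (k : fieldType) (v : k -> int).
Hypothesis hk : dyadic_local_field v.
Variables (alpha beta : k).
Hypothesis hD : is_quat_division alpha beta.
Variables (n : nat) (a : 'I_n -> quat k).
Hypothesis ha_nz : forall i, a i <> qzero.
Hypothesis ha_sorted : forall i j : 'I_n, (i <= j)%N ->
      nuD alpha beta v (a i) <= nuD alpha beta v (a j).
Hypothesis hmu : nuD alpha beta v (qofk 4%:R) <
         mu [seq nuD alpha beta v (a i) | i <- enum 'I_n].
Hypothesis hsq : forall i0 j : 'I_n, val i0 = 0%N ->
      in_sqclass (qN alpha beta (a j)) (qN alpha beta (a i0)).
Variables (m : 'I_n) (r : quat k) (lam : 'I_n -> quat k).
Hypothesis hU : inU alpha beta a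
          (simple_rot alpha beta a (svec m r lam) (sigmaB alpha beta a m r))
          (inStd alpha beta v (n:=n)).
Variable t : nat.
Hypothesis ht1 : (1 <= t)%N.
Hypothesis ht2 : (m + t < n)%N.
Hypothesis hmax : forall i j : 'I_n, val i = (m + t)%N -> (m + t < j)%N ->
      leabs alpha beta v (lam j) (lam i).

Local Notation N := (qN alpha beta).
Local Notation qm := (qmul alpha beta).
Local Notation nu := (nuD alpha beta v).
Let inOv p : inO alpha beta v p <-> vge v (N p) 0 := inO_vge alpha beta hk p.

Let M := val m.
Let ot : 'I_n := Ordinal ht2.
Let A (j : nat) : int := nu (a (insubd m j)).

Lemma insubd_val (j : nat) : (j < n)%N -> val (insubd m j) = j.
Proof. by move=> h; rewrite val_insubd h. Qed.

Lemma A_val (i : 'I_n) : A i = nu (a i).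
Proof. by rewrite /A valKd. Qed.

Lemma A_mono p q : (p <= q)%N -> (q < n)%N -> A p <= A q.
Proof.
move=> hpq hq; apply: ha_sorted; rewrite !insubd_val //; exact: leq_ltn_trans hq.
Qed.

Lemma alist : [seq nu (a i) | i <- enum 'I_n] = map A (iota 0 n).
Proof. by rewrite -val_enum_ord -map_comp; apply: eq_map => i /=; rewrite A_val. Qed.

Let mua := mu [seq nu (a i) | i <- enum 'I_n].

Lemma n_pos : (0 < n)%N. Proof. by apply: leq_ltn_trans ht2. Qed.

Lemma mua_le j : (j.+1 < n)%N -> mua <= A j.+1 - A j.
Proof.
move=> hj; rewrite /mua /mu alist sorted_sort; last first.
  apply: sorted_map_iota => p q _ hpq hq; apply: A_mono hpq _; by rewrite add0n in hq.
  by move=> x y z; apply: le_trans.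
case: n hj (A_mono) => [|n'] //= hj _.
apply: gapmin_le.
rewrite (pairmap_iota A 0 n').
apply/mapP; exists j => //; rewrite mem_iota /=; by rewrite ltnS in hj.
Qed.

Lemma A_gap i : (m + t < i)%N -> (i < n)%N -> A (m + t) + mua <= A i.
Proof.
move=> h1 h2.
have := mua_le (j := (m + t)%N) (leq_ltn_trans h1 h2).
have := A_mono h1 h2.
lia.
Qed.

Lemma v4 : nu (qofk 4%:R) = 4%:Z * v 2%:R.
Proof.
rewrite /nuD qN_ofk.
have h2 := two_neq0 hk.
have e4 : (4%:R : k) = 2%:R * 2%:R by rewrite -natrM.
have h4 : (4%:R : k) != 0 by rewrite e4 mulf_neq0.
rewrite (vM hk h4 h4) e4 (vM hk h2 h2); lia.
Qed.

Lemma mua_big : 4%:Z * v 2%:R + 1 <= mua.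
Proof. by have := hmu; rewrite v4 -/mua; lia. Qed.


Let lt := lam ot.
Let muq (i : 'I_n) := qm (qinv alpha beta lt) (lam i).
Let u (j : 'I_t.+1) : vec k n := fun i =>
  if val i == (M + j)%N then qone
  else if (val j == t) && (M + t < val i)%N then muq i else qzero.

Lemma muq_int (i : 'I_n) : (M + t < i)%N -> vge v (N (muq i)) 0.
Proof.
move=> hi; rewrite /muq qNM qN_inv.
case: (hmax (i := ot) (j := i) erefl hi) => [->|[h1 h2]]; first by rewrite mulr0; left.
have [->|h3] := eqVneq (N (lam i)) 0; first by rewrite mulr0; left.
right; rewrite (vM hk (invr_neq0 h1) h3) (vV hk h1); lia.
Qed.

Lemma sum_comp (p : nat) (F : 'I_p -> vec k n) i :
  (\big[@vadd k n/@vzero k n]_(j < p) F j) i = \big[@qadd k/qzero]_(j < p) F j i.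
Proof.
apply: (big_ind2 (fun (X : vec k n) Y => X i = Y)) => //.
by move=> x1 x2 y1 y2 <- <-.
Qed.

Lemma comb_comp (c : 'I_t.+1 -> quat k) (i : 'I_n) :
  (\big[@vadd k n/@vzero k n]_(j < t.+1) vscale alpha beta (c j) (u j)) i =
  if (val i < M)%N then qzero
  else if (val i <= M + t)%N then c (inord (val i - M))
  else qm (c ord_max) (muq i).
Proof.
rewrite sum_comp /vscale /u.
case: (ltnP (val i) M) => h1.
  rewrite big1 // => j _.
  have -> : (val i == (M + j)%N) = false by apply/negbTE; rewrite neq_ltn (leq_trans h1) ?leq_addr.
  have -> : (M + t < val i)%N = false by apply/negbTE; rewrite -leqNgt (leq_trans (ltnW h1)) ?leq_addr.
  by rewrite andbF qmulr0.
case: (leqP (val i) (M + t)) => h2.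
  rewrite (bigD1 (inord (val i - M))) //= inordK; last by rewrite ltnS leq_subLR.
  rewrite subnKC // eqxx qmulr1 big1 ?qaddr0 // => j hj.
  have -> : (val i == (M + j)%N) = false.
    apply/negbTE; apply: contra hj => /eqP e; apply/eqP/val_inj; rewrite /= e addKn inordK //.
  by rewrite andbF qmulr0.
rewrite (bigD1 ord_max) //= eqxx /=.
have -> : (val i == (M + t)%N) = false by apply/negbTE; rewrite neq_ltn h2 orbT.
rewrite big1 ?qaddr0 // => j hj.
have hjt : (val j == t) = false.
  by apply/negbTE; apply: contra hj => /eqP e; apply/eqP/val_inj.
have -> : (val i == (M + j)%N) = false.
  apply/negbTE; rewrite neq_ltn; apply/orP; right.
  by apply: leq_ltn_trans h2; rewrite leq_add2l -ltnS.
by rewrite hjt qmulr0.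
Qed.


Definition Pv (y : vec k n) :=
  (forall i : 'I_n, (val i < M)%N -> y i = qzero) /\
  (forall i : 'I_n, (M + t < val i)%N -> y i = qm (y ot) (muq i)).

Lemma inord_t : inord t = (ord_max : 'I_t.+1).
Proof. by apply: val_inj; rewrite /= inordK. Qed.

Lemma span_to y : inSpan alpha beta v u y ->
  Pv y /\ (forall i : 'I_n, (M <= val i <= M + t)%N -> inO alpha beta v (y i)).
Proof.
case=> c [hc ->]; split; first split.
- by move=> i hi; rewrite comb_comp hi.
- move=> i hi; rewrite !comb_comp /= (_ : (m + t = M + t)%N) //.
  have -> : (M + t < M)%N = false by rewrite ltnNge leq_addr.
  rewrite leqnn addKn inord_t.
  have -> : (val i < M)%N = false by rewrite ltnNge (leq_trans (leq_addr _ _) (ltnW hi)).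
  by have -> : (val i <= M + t)%N = false by rewrite leqNgt hi.
- move=> i /andP [h1 h2]; rewrite comb_comp ltnNge h1 h2 /=; exact: hc.
Qed.

Lemma span_of y : Pv y -> (forall i : 'I_n, (M <= val i <= M + t)%N -> inO alpha beta v (y i)) ->
  inSpan alpha beta v u y.
Proof.
move=> [hP1 hP2] hI.
have hjn (j : 'I_t.+1) : (M + j < n)%N.
  by apply: leq_ltn_trans ht2; rewrite leq_add2l -ltnS.
exists (fun j : 'I_t.+1 => y (insubd m (M + j)%N)); split.
  by move=> j; apply: hI; rewrite insubd_val // leq_addr leq_add2l -ltnS /=.
apply: functional_extensionality => i; rewrite comb_comp.
case: (ltnP (val i) M) => h1; first exact: hP1.
case: (leqP (val i) (M + t)) => h2.
  have hi : (val i - M < t.+1)%N by rewrite ltnS leq_subLR.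
  by congr y; rewrite inordK // subnKC // valKd.
rewrite hP2 //; congr qm; congr y; apply: val_inj; rewrite insubd_val //.
Qed.

Lemma span_std y : inSpan alpha beta v u y -> inStd alpha beta v y.
Proof.
move=> hy; have [[hP1 hP2] hI] := span_to hy.
move=> i; case: (ltnP (val i) M) => h1.
  by rewrite hP1 //; apply/inOv; rewrite qN0; left.
case: (leqP (val i) (M + t)) => h2; first by apply: hI; rewrite h1 h2.
rewrite hP2 //; apply/inOv; rewrite qNM.
have := vge_mul hk (iffLR (inOv _) (hI ot _)) (muq_int h2).
  by rewrite addr0; apply; rewrite /= leq_addr leqnn.
Qed.


Let s := svec m r lam.
Let sig := sigmaB alpha beta a m r.
Let rot := simple_rot alpha beta a s sig.

Lemma Pv_s : Pv s.
Proof.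
split=> i hi.
  rewrite /s /svec; have -> : (i == m) = false.
    by apply/negbTE; apply: contraTneq hi => ->; rewrite ltnn.
  by rewrite ltnNge (ltnW hi).
have him : (i == m) = false.
  by apply/negbTE; apply: contraTneq hi => ->; rewrite -leqNgt leq_addr.
have hot : (ot == m) = false.
  by apply/negbTE/eqP => /(congr1 val) /= /eqP; rewrite -{2}(addn0 m) eqn_add2l; case: t ht1.
have h1 : (m < i)%N by apply: leq_ltn_trans hi; rewrite leq_addr.
have h2 : (m < ot)%N by rewrite /= -{1}(addn0 m) ltn_add2l.
rewrite /s /svec him hot h1 h2.
rewrite /muq -/lt.
have [h|h] := eqVneq (N lt) 0.
  have hl0 := N0_eq hD h; rewrite hl0.
  case: (hmax (i := ot) (j := i) erefl hi) => [hl|[hl _]]; last by rewrite -/lt h eqxx in hl.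
  by rewrite (N0_eq hD hl) qopp0 qmul0r.
by rewrite qmulNr qmulA qmulV // qmul1r.
Qed.

Lemma Pv_comb (op : quat k -> quat k -> quat k) x y d :
  op qzero qzero = qzero ->
  (forall p q w, op (qm p w) (qm d (qm q w)) = qm (op p (qm d q)) w) ->
  Pv x -> Pv y -> Pv (fun i => op (x i) (qm d (y i))).
Proof.
move=> h0 hm [hx1 hx2] [hy1 hy2]; split=> i hi.
  by rewrite hx1 // hy1 // qmulr0.
by rewrite hx2 // hy2 // hm.
Qed.

Lemma Pv_rot x : Pv x -> Pv (rot x).
Proof.
move=> hx; apply: (Pv_comb (op := @qsub k)) hx Pv_s.
  exact: qsub00.
by move=> *; rewrite q_sub_mul.
Qed.

Lemma stab : stabilizes rot (inSpan alpha beta v u).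
Proof.
split.
  move=> x hx; have hs := span_std hx.
  have hr := hU.2.1 x hs.
  apply: span_of; first exact: Pv_rot (span_to hx).1.
  by move=> i _; exact: hr i.
move=> y hy; have [x [hx e]] := hU.2.2 y (span_std hy).
exists x; split => //; apply: span_of; last by move=> i _; exact: hx i.
have -> : x = (fun i => qadd (y i) (qm (qm (herm alpha beta a x s) (qinv alpha beta sig)) (s i))).
  by apply: functional_extensionality => i; rewrite -e /rot /simple_rot qsub_add.
apply: (Pv_comb (op := @qadd k)) (span_to hy).1 Pv_s.
  exact: qaddr0.
by move=> *; rewrite q_add_mul.
Qed.


Lemma herm_orth (i j : 'I_t.+1) : i != j -> herm alpha beta a (u i) (u j) = qzero.
Proof.
move=> hij; rewrite /herm big1 // => ii _.
have key : u i ii = qzero \/ u j ii = qzero.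
  rewrite /u; case: eqP => e1.
    right; have -> : (val ii == (M + j)%N) = false.
      by apply/negbTE; rewrite e1 eqn_add2l; apply: contra hij => /eqP e; apply/eqP/val_inj.
    case: eqP => //= ejt; rewrite e1 ltn_add2l.
    have hit : (val i < t)%N.
      rewrite ltn_neqAle -ltnS ltn_ord andbT; apply: contra hij => /eqP e.
      by apply/eqP/val_inj; rewrite e; exact: (esym ejt).
    by rewrite ltnNge (ltnW hit).
  case: ifP => [/andP [/eqP eit hlt]|_]; last by left.
  right.
  have -> : (val ii == (M + j)%N) = false.
    by apply/negbTE; rewrite neq_ltn; apply/orP; right; apply: leq_ltn_trans hlt; rewrite leq_add2l -ltnS.
  have -> : (val j == t) = false.
    by apply/negbTE; apply: contra hij => /eqP e; apply/eqP/val_inj; rewrite /= e eit.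
  by [].
case: key => ->; first by rewrite qmul0r qmul0r.
by rewrite qconj0 qmulr0.
Qed.

Lemma herm_small (j : 'I_t.+1) : (val j < t)%N ->
  herm alpha beta a (u j) (u j) = a (insubd m (M + j)%N).
Proof.
move=> hj.
have hjn : (M + j < n)%N by apply: leq_ltn_trans ht2; rewrite leq_add2l ltnW.
rewrite /herm (bigD1 (insubd m (M + j)%N)) //=.
rewrite /u insubd_val // eqxx qmul1r qconj1 qmulr1 big1 ?qaddr0 // => ii hii.
have -> : (val ii == (M + j)%N) = false.
  apply/negbTE; apply: contra hii => /eqP e; apply/eqP/val_inj; rewrite insubd_val //.
have -> : (val j == t) = false by apply/negbTE; rewrite neq_ltn hj.
by rewrite qmul0r qmul0r.
Qed.

Let e := \big[@qadd k/qzero]_(i < n | (M + t < val i)%N) qm (qm (muq i) (a i)) (qconj (muq i)).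

Lemma herm_last : herm alpha beta a (u ord_max) (u ord_max) = qadd (a ot) e.
Proof.
rewrite /herm (bigD1 ot) //=.
have -> : u ord_max ot = qone by rewrite /u ifT //; apply/eqP.
rewrite qmul1r qconj1 qmulr1; congr qadd.
rewrite /e big_mkcond [in RHS]big_mkcond; apply: eq_bigr => ii _.
case: eqVneq => [->|hne] /=; first by rewrite ltnn.
rewrite /u /=.
have -> : (val ii == (M + t)%N) = false.
  by apply/negbTE; apply: contra hne => /eqP e0; apply/eqP/val_inj.
rewrite eqxx /=; case: ifP => // _.
by rewrite qmul0r qmul0r.
Qed.


Lemma A_ot : A (M + t) = nu (a ot). Proof. exact: (A_val ot). Qed.

Lemma e_small : vge v (N e) (nu (a ot) + 4%:Z * v 2%:R + 1).
Proof.
apply: (N_ultra_big hk hD) => i hi.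
rewrite (qNM _ _ (qm (muq i) (a i))) (qNM _ _ (muq i) (a i)) qN_conj.
have := vge_mul hk (vge_mul hk (muq_int hi) (@vge_self _ v (N (a i)))) (muq_int hi).
move/vge_le; apply.
have := A_gap hi (ltn_ord i); rewrite A_val A_ot.
have := mua_big; rewrite -/mua /nuD; lia.
Qed.

Lemma blast_norm : exists x, x != 0 /\ v (x * x) = 0 /\
  N (qadd (a ot) e) = N (a ot) * (x * x).
Proof.
have hA : N (a ot) != 0 by apply: (N_neq0 hD); exact: ha_nz.
have he := e_small.
have hv2 := v2pos hk.
have htr : vge v (2%:R * q0 (qm (a ot) (qconj e))) (nu (a ot) + 2%:Z * v 2%:R + 1).
  apply: (trace_int hk hD); rewrite qNM qN_conj.
  have := vge_mul hk (@vge_self _ v (N (a ot))) he; move/vge_le; apply; rewrite /nuD; lia.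
have h1 : vge v (N e + 2%:R * q0 (qm (a ot) (qconj e))) (nu (a ot) + 2%:Z * v 2%:R + 1).
  apply: (vge_add hk) htr; apply: vge_le he _; lia.
have hz : vge v ((N e + 2%:R * q0 (qm (a ot) (qconj e))) / N (a ot)) (2%:Z * v 2%:R + 1).
  have := vge_mul hk h1 (vge_inv hk (N (a ot))); move/vge_le; apply; rewrite /nuD; lia.
have [x [x0 hx]] := vsqrt hk hz.
exists x; split => //; split.
  rewrite -hx; apply: (proj2 (v_unit hk (vge_le hz _))); lia.
rewrite qN_add -hx; field => //.
Qed.


Lemma bb_cases (j : 'I_t.+1) :
  ((val j < t)%N /\ herm alpha beta a (u j) (u j) = a (insubd m (M + j)%N)) \/
  (j = ord_max /\ herm alpha beta a (u j) (u j) = qadd (a ot) e).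
Proof.
case: (ltnP (val j) t) => hj; first by left; split => //; exact: herm_small.
right; have -> : j = ord_max by apply: val_inj => /=; apply/eqP; rewrite eqn_leq hj -ltnS ltn_ord.
by split => //; exact: herm_last.
Qed.

Lemma nu_bb (j : 'I_t.+1) : nu (herm alpha beta a (u j) (u j)) = A (M + j).
Proof.
have [x [x0 [vx hN]]] := blast_norm.
case: (bb_cases j) => [[_ ->] //|[-> ->]].
have hA : N (a ot) != 0 by apply: (N_neq0 hD); exact: ha_nz.
rewrite /= A_ot /nuD hN (vM hk hA) ?mulf_neq0 // vx addr0 //.
Qed.

Lemma main_sec : exists (u' : 'I_t.+1 -> vec k n) (b : 'I_t.+1 -> quat k),
    (forall j, b j <> qzero) /\
    (forall j, herm alpha beta a (u' j) (u' j) = b j) /\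
    (forall i j, i != j -> herm alpha beta a (u' i) (u' j) = qzero) /\
    (forall x, inSpan alpha beta v u' x -> inStd alpha beta v x) /\
    inU alpha beta a
      (simple_rot alpha beta a (svec m r lam) (sigmaB alpha beta a m r))
      (inSpan alpha beta v u') /\
    mu [seq nuD alpha beta v (a i) | i <- enum 'I_n]
      <= mu [seq nuD alpha beta v (b j) | j <- enum 'I_t.+1] /\
    (forall i0 : 'I_n, val i0 = 0%N -> forall j,
      in_sqclass (qN alpha beta (b j)) (qN alpha beta (a i0))).
Proof.
have [x [x0 [vx hN]]] := blast_norm.
have hA : N (a ot) != 0 by apply: (N_neq0 hD); exact: ha_nz.
exists u, (fun j => herm alpha beta a (u j) (u j)).
split.
  move=> j; case: (bb_cases j) => [[_ ->]|[_ ->]]; first exact: ha_nz.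
  by move=> h; move: (mulf_neq0 hA (mulf_neq0 x0 x0)); rewrite -hN h qN0 eqxx.
split => //.
split; first exact: herm_orth.
split; first exact: span_std.
split; first by split; [exact: hU.1 | exact: stab].
split.
  have -> : [seq nu (herm alpha beta a (u j) (u j)) | j <- enum 'I_t.+1] =
      map (fun j => A (M + j)) (iota 0 t.+1).
    by rewrite -val_enum_ord -map_comp; apply: eq_map => j /=; rewrite nu_bb.
  rewrite -/mua /mu sorted_sort; last first.
    apply: sorted_map_iota => p q _ hpq hq; apply: A_mono; first by rewrite leq_add2l.
    by apply: leq_ltn_trans ht2; rewrite leq_add2l -ltnS.
    by move=> ? ? ?; apply: le_trans.
  rewrite [map _ _]/= -/gapf.
  apply: gapmin_ge; first by case: t ht1.
  rewrite (pairmap_iota (fun j => A (M + j)) 0 t) => y /mapP [j hj ->].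
  rewrite mem_iota /= in hj; rewrite addnS; apply: mua_le.
  by apply: leq_ltn_trans ht2; rewrite -addnS leq_add2l.
move=> i0 hi0 j; case: (bb_cases j) => [[_ ->]|[_ ->]]; first exact: hsq.
have [e' [e0 he]] := hsq ot hi0.
exists (e' * x); split; first by rewrite mulf_neq0.
by rewrite hN he; ring.
Qed.

End Main.

Theorem theorem2
  (k : fieldType) (v : k -> int) (hk : dyadic_local_field v)
  (alpha beta : k) (hD : is_quat_division alpha beta)
  (n : nat) (a : 'I_n -> quat k)
  (ha_pure : forall i, pure (a i)) (ha_nz : forall i, a i <> qzero)
  (ha_sorted : forall i j : 'I_n, (i <= j)%N ->
      nuD alpha beta v (a i) <= nuD alpha beta v (a j))
  (hmu : nuD alpha beta v (qofk 4%:R) <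
         mu [seq nuD alpha beta v (a i) | i <- enum 'I_n])
  (hsq : forall i0 j : 'I_n, val i0 = 0%N ->
      in_sqclass (qN alpha beta (a j)) (qN alpha beta (a i0)))
  (m : 'I_n) (r : quat k) (lam : 'I_n -> quat k)
  (hr : inO alpha beta v r)
  (hr2 : leabs alpha beta v (qofk 2%:R) (qsub qone r))
  (hlam : forall l : 'I_n, (m < l)%N -> inO alpha beta v (lam l))
  (hsig_nz : sigmaB alpha beta a m r <> qzero)
  (hsig : qsub (sigmaB alpha beta a m r) (qconj (sigmaB alpha beta a m r))
          = herm alpha beta a (svec m r lam) (svec m r lam))
  (hU : inU alpha beta a
          (simple_rot alpha beta a (svec m r lam) (sigmaB alpha beta a m r))
          (inStd alpha beta v (n:=n)))
  (t : nat) (ht1 : (1 <= t)%N) (ht2 : (m + t < n)%N)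
  (hmax : forall i j : 'I_n, val i = (m + t)%N -> (m + t < j)%N ->
      leabs alpha beta v (lam j) (lam i)) :
  exists (u : 'I_t.+1 -> vec k n) (b : 'I_t.+1 -> quat k),
    (forall j, b j <> qzero) /\
    (forall j, herm alpha beta a (u j) (u j) = b j) /\
    (forall i j, i != j -> herm alpha beta a (u i) (u j) = qzero) /\
    (forall x, inSpan alpha beta v u x -> inStd alpha beta v x) /\
    inU alpha beta a
      (simple_rot alpha beta a (svec m r lam) (sigmaB alpha beta a m r))
      (inSpan alpha beta v u) /\
    mu [seq nuD alpha beta v (a i) | i <- enum 'I_n]
      <= mu [seq nuD alpha beta v (b j) | j <- enum 'I_t.+1] /\
    (forall i0 : 'I_n, val i0 = 0%N -> forall j,
      in_sqclass (qN alpha beta (b j)) (qN alpha beta (a i0))).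
Proof.
intros; eapply main_sec; eassumption.
Qed.
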